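(* Let $H=\sum_{i,j=1}^n\left(\tfrac12\mu_{ij}p_ip_j+\tfrac12\kappa_{ij}q_iq_j+\tfrac12\gamma_{ij}p_iq_j+\tfrac12\gamma_{ji}q_ip_j\right)$ with $\mu,\kappa$ real symmetric, $\gamma$ real, and $[p_i,q_j]=-i\delta_{ij}$, $[p_i,p_j]=[q_i,q_j]=0$ ($p_i,q_i$ Hermitian). If $H$ is Dirac diagonalizable and $H=\sum_{i=1}^n\omega_id_i^\dagger d_i+C=\sum_{i=1}^n\omega_i'd_i'^\dagger d_i'+C'$ are two diagonalized forms, then the multisets $\{\omega_1,\dots,\omega_n\}$ and $\{\omega_1',\dots,\omega_n'\}$ coincide; i.e., the diagonalized form is unique up to a permutation of the quadratic terms.
   Context: A diagonalized (Dirac) form of $H$ is an expression $H=\sum_i\omega_id_i^\dagger d_i+C$ with $\omega_i,C$ real, where $d_1,\dots,d_n$ are complex linear combinations of $p_1,\dots,p_n,q_1,\dots,q_n$ satisfying $[d_i,d_j^\dagger]=\delta_{ij}$, $[d_i,d_j]=0$. $H$ is Dirac diagonalizable if such a form exists. *)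

(* Defs.v *)
From HB Require Import structures.
From mathcomp Require Import all_boot all_order all_algebra.
From mathcomp Require Import complex.
From mathcomp Require Import reals.
Set Implicit Arguments. Unset Strict Implicit. Unset Printing Implicit Defensive.
Import Order.TTheory GRing.Theory Num.Theory.
Local Open Scope ring_scope.
Local Open Scope complex_scope.

Definition comm (A : nzRingType) (x y : A) : A := x * y - y * x.

Definition is_star (R : realType) (A : algType R[i]) (st : A -> A) : Prop :=
  [/\ forall x y, st (x + y) = st x + st y,
      forall (c : R[i]) x, st (c *: x) = c^* *: st x,
      forall x y, st (x * y) = st y * st x &
      forall x, st (st x) = x].

Definition CCR (R : realType) (A : algType R[i]) (st : A -> A) (n : nat)
  (p q : 'I_n -> A) : Prop :=
  [/\ forall i, st (p i) = p i,
      forall i, st (q i) = q i,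
      forall i j, comm (p i) (q j) = (- 'i * (i == j)%:R)%:A,
      forall i j, comm (p i) (p j) = 0 &
      forall i j, comm (q i) (q j) = 0].

Definition quadH (R : realType) (A : algType R[i]) (n : nat)
  (mu kappa gamma : 'M[R]_n) (p q : 'I_n -> A) : A :=
  \sum_(i < n) \sum_(j < n)
     ( ((mu i j / 2)%:C) *: (p i * p j)
     + ((kappa i j / 2)%:C) *: (q i * q j)
     + ((gamma i j / 2)%:C) *: (p i * q j)
     + ((gamma j i / 2)%:C) *: (q i * p j)).

Definition diag_form (R : realType) (A : algType R[i]) (st : A -> A) (n : nat)
  (p q : 'I_n -> A) (H : A) (omega : 'I_n -> R) (c : R) (d : 'I_n -> A) : Prop :=
  [/\ exists a b : 'M[R[i]]_n,
        forall i, d i = \sum_(j < n) (a i j *: p j + b i j *: q j),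
      forall i j, comm (d i) (st (d j)) = (i == j)%:R,
      forall i j, comm (d i) (d j) = 0 &
      H = \sum_(i < n) ((omega i)%:C *: (st (d i) * d i)) + (c%:C)%:A].

Definition dirac_diagonalizable (R : realType) (A : algType R[i]) (st : A -> A)
  (n : nat) (p q : 'I_n -> A) (H : A) : Prop :=
  exists omega c d, @diag_form R A st n p q H omega c d.

(* Main.v *)
Require Import Defs.
From HB Require Import structures.
From mathcomp Require Import all_boot all_order all_algebra.
From mathcomp Require Import complex.
From mathcomp Require Import reals.
From mathcomp Require Import ring.
Set Implicit Arguments. Unset Strict Implicit. Unset Printing Implicit Defensive.
Import Order.TTheory GRing.Theory Num.Theory.
Local Open Scope ring_scope.
Local Open Scope complex_scope.

Section Alg.
Variable R : realType.
Local Notation C := R[i].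
Variable A : algType C.
Implicit Types x y z : A.

Lemma commC x y : comm x y = - comm y x.
Proof. by rewrite /comm opprB. Qed.
Lemma commDl x y z : comm (x + y) z = comm x z + comm y z.
Proof. by rewrite /comm mulrDl mulrDr opprD addrACA. Qed.
Lemma commDr x y z : comm x (y + z) = comm x y + comm x z.
Proof. by rewrite commC commDl opprD -!commC. Qed.
Lemma comm0l x : comm 0 x = 0. Proof. by rewrite /comm mul0r mulr0 subrr. Qed.
Lemma comm0r x : comm x 0 = 0. Proof. by rewrite /comm mul0r mulr0 subrr. Qed.
Lemma commZl (a : C) x y : comm (a *: x) y = a *: comm x y.
Proof. by rewrite /comm -scalerAl -scalerAr scalerBr. Qed.
Lemma commZr (a : C) x y : comm x (a *: y) = a *: comm x y.
Proof. by rewrite commC commZl -scalerN -commC. Qed.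
Lemma comm_suml I r (P : pred I) (F : I -> A) y :
  comm (\sum_(i <- r | P i) F i) y = \sum_(i <- r | P i) comm (F i) y.
Proof. by rewrite (big_morph (fun x => comm x y) (fun a b => commDl a b y) (comm0l y)). Qed.
Lemma comm_sumr I r (P : pred I) (F : I -> A) y :
  comm y (\sum_(i <- r | P i) F i) = \sum_(i <- r | P i) comm y (F i).
Proof. by rewrite (big_morph (comm y) (fun a b => commDr y a b) (comm0r y)). Qed.
Lemma comm_algl (a : C) y : comm (a%:A) y = 0.
Proof. by rewrite /comm mulr_algl mulr_algr subrr. Qed.
Lemma comm_algr (a : C) y : comm y (a%:A) = 0.
Proof. by rewrite commC comm_algl oppr0. Qed.
Lemma comm_mull x y z : comm (x * y) z = x * comm y z + comm x z * y.
Proof. by rewrite /comm mulrBr mulrBl !mulrA addrA subrK. Qed.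
Lemma alg_inj (a b : C) : a%:A = b%:A :> A -> a = b.
Proof.
move/eqP; rewrite -subr_eq0 -scalerBl scaler_eq0 oner_eq0 orbF subr_eq0.
by move/eqP.
Qed.
Lemma nat_alg (b : nat) : (b%:R : A) = ((b%:R : C))%:A.
Proof. by rewrite scaler_nat. Qed.

Variable st : A -> A.
Hypothesis Hst : is_star st.
Lemma stD x y : st (x + y) = st x + st y. Proof. by case: Hst. Qed.
Lemma stZ (a : C) x : st (a *: x) = a^* *: st x. Proof. by case: Hst. Qed.
Lemma stM x y : st (x * y) = st y * st x. Proof. by case: Hst. Qed.
Lemma stK x : st (st x) = x. Proof. by case: Hst. Qed.
Lemma st0 : st 0 = 0.
Proof. by have := stZ 0 (0 : A); rewrite rmorph0 !scale0r. Qed.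
Lemma stN x : st (- x) = - st x.
Proof. by rewrite -scaleN1r stZ rmorphN1 scaleN1r. Qed.
Lemma st_sum I r (P : pred I) (F : I -> A) :
  st (\sum_(i <- r | P i) F i) = \sum_(i <- r | P i) st (F i).
Proof. by rewrite (big_morph st stD st0). Qed.
Lemma st1 : st 1 = 1.
Proof. have := stM (st 1) 1. rewrite mulr1 stK mulr1. by move/esym. Qed.
Lemma st_alg (a : C) : st (a%:A) = (a^*)%:A.
Proof. by rewrite stZ st1. Qed.
Lemma st_comm x y : st (comm x y) = comm (st y) (st x).
Proof. by rewrite /comm stD stN !stM. Qed.

Variable n : nat.
Variables p q : 'I_n -> A.
Hypothesis Hccr : CCR st p q.

Definition lin (u : 'rV[C]_(n + n)) : A :=
  \sum_(i < n) (u 0 (lshift n i) *: p i + u 0 (rshift n i) *: q i).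

Lemma st_lin u : st (lin u) = lin (map_mx conjc u).
Proof.
case: Hccr => Hp Hq _ _ _.
rewrite /lin st_sum; apply: eq_bigr => i _.
by rewrite stD !stZ Hp Hq !mxE.
Qed.

Lemma comm_term i j (a b c d : C) :
  comm (a *: p i + b *: q i) (c *: p j + d *: q j) =
  (((i == j)%:R : C) * ('i * (b * c - a * d)))%:A.
Proof.
case: Hccr => _ _ Hpq Hpp Hqq.
rewrite commDl !commDr !commZl !commZr Hpp Hqq [comm (q i) (p j)]commC !Hpq.
rewrite eq_sym !scaler0 !addr0 add0r !scalerN !scalerA -scalerBl.
congr (_ *: 1); ring.
Qed.

Lemma comm_lin u v : comm (lin u) (lin v) =
  (\sum_(i < n) 'i * (u 0 (rshift n i) * v 0 (lshift n i)
                      - u 0 (lshift n i) * v 0 (rshift n i)))%:A.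
Proof.
rewrite /lin comm_suml scaler_suml; apply: eq_bigr => i _.
rewrite comm_sumr (bigD1 i) //= big1 ?addr0; first by rewrite comm_term eqxx mul1r.
by move=> j /negbTE ji; rewrite comm_term eq_sym ji mul0r scale0r.
Qed.

Definition Km : 'M[C]_(n + n) := block_mx 0 (- 'i)%:M ('i)%:M 0.

Lemma Km_form (u v : 'rV[C]_(n + n)) : (u *m Km *m v^T) 0 0 =
  \sum_(i < n) 'i * (u 0 (rshift n i) * v 0 (lshift n i)
                      - u 0 (lshift n i) * v 0 (rshift n i)).
Proof.
rewrite -[u in LHS]hsubmxK -[v in LHS]hsubmxK /Km mul_row_block tr_row_mx mul_row_col.
rewrite !mulmx0 add0r addr0 !mul_mx_scalar -!scalemxAl !mxE !big_distrr -big_split /=.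
apply: eq_bigr => i _; rewrite !mxE; ring.
Qed.

Definition Jm : 'M[C]_(n + n) := block_mx 0 1%:M (-1)%:M 0.

Lemma JmJm : Jm *m Jm = (-1)%:M.
Proof.
rewrite /Jm mulmx_block !mulmx0 !mul0mx !add0r !addr0 mul1mx mulmx1.
by rewrite scalar_mx_block.
Qed.

Lemma entry_row m k (M : 'M[C]_(m, k)) (K : 'M_k) r s :
  (M *m K *m M^T) r s = (row r M *m K *m (row s M)^T) 0 0.
Proof.
rewrite !mxE; apply: eq_bigr => l _; rewrite !mxE; congr (_ * _).
by apply: eq_bigr => j _; rewrite !mxE.
Qed.

Definition Nm (X : 'M[C]_(n, n + n)) : 'M_(n + n) := col_mx X (map_mx conjc X).

Lemma lin_row_conj (X : 'M[C]_(n, n + n)) i : lin (row i (map_mx conjc X)) = st (lin (row i X)).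
Proof. by rewrite st_lin; congr lin; apply/rowP => k; rewrite !mxE. Qed.

Lemma NKN (X : 'M[C]_(n, n + n)) :
  (forall i j, comm (lin (row i X)) (st (lin (row j X))) = (i == j)%:R) ->
  (forall i j, comm (lin (row i X)) (lin (row j X)) = 0) ->
  Nm X *m Km *m (Nm X)^T = Jm.
Proof.
move=> H1 H2; apply/matrixP => r s; rewrite entry_row Km_form; apply: alg_inj.
rewrite -comm_lin -[r]splitK -[s]splitK.
case: (split r) => i; case: (split s) => j /=; rewrite /Nm ?rowKu ?rowKd ?lin_row_conj /Jm.
- by rewrite H2 block_mxEul mxE scale0r.
- by rewrite H1 block_mxEur mxE nat_alg.
- by rewrite commC H1 block_mxEdl mxE mulNrn eq_sym nat_alg scaleNr.
- by rewrite -st_comm H2 st0 block_mxEdr mxE scale0r.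
Qed.

Lemma lin_mul m (w : 'rV[C]_m) (M : 'M[C]_(m, n + n)) :
  lin (w *m M) = \sum_(r < m) w 0 r *: lin (row r M).
Proof.
rewrite /lin; under eq_bigr do rewrite !mxE !scaler_suml -big_split /=.
rewrite exchange_big /=; apply: eq_bigr => r _.
rewrite scaler_sumr; apply: eq_bigr => i _.
by rewrite !mxE scalerDr !scalerA.
Qed.

Lemma span (X : 'M[C]_(n, n + n)) :
  (forall i j, comm (lin (row i X)) (st (lin (row j X))) = (i == j)%:R) ->
  (forall i j, comm (lin (row i X)) (lin (row j X)) = 0) ->
  forall x : 'rV[C]_(n + n), exists al be : 'I_n -> C,
    lin x = \sum_(i < n) (al i *: lin (row i X) + be i *: st (lin (row i X))).
Proof.
move=> H1 H2 x.
set B := Km *m (Nm X)^T *m - Jm.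
have NB : Nm X *m B = 1%:M.
  by rewrite /B !mulmxA NKN // mulmxN JmJm raddfN opprK.
have BN := mulmx1C NB.
pose w := x *m B.
exists (fun i => w 0 (lshift n i)), (fun i => w 0 (rshift n i)).
have -> : x = w *m Nm X by rewrite /w -mulmxA BN mulmx1.
rewrite lin_mul big_split_ord big_split /=; congr (_ + _); apply: eq_bigr => i _.
  by rewrite /Nm rowKu.
by rewrite /Nm rowKd lin_row_conj.
Qed.

Lemma H_comm (d : 'I_n -> A) (om : 'I_n -> R) (c : R) H :
  (forall i j, comm (d i) (st (d j)) = (i == j)%:R) ->
  (forall i j, comm (d i) (d j) = 0) ->
  H = \sum_(i < n) ((om i)%:C *: (st (d i) * d i)) + (c%:C)%:A ->
  (forall k, comm H (d k) = - (om k)%:C *: d k) /\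
  (forall k, comm H (st (d k)) = (om k)%:C *: st (d k)).
Proof.
move=> H1 H2 ->; split=> k; rewrite commDl comm_algl addr0 comm_suml.
- rewrite (bigD1 k) //= big1 ?addr0.
    by rewrite commZl comm_mull H2 mulr0 add0r commC H1 eqxx mulN1r scalerN scaleNr.
  move=> i /negbTE ik.
  by rewrite commZl comm_mull H2 mulr0 add0r commC H1 eq_sym ik oppr0 mul0r scaler0.
- rewrite (bigD1 k) //= big1 ?addr0.
    by rewrite commZl comm_mull -st_comm H2 st0 mul0r addr0 H1 eqxx mulr1.
  move=> i /negbTE ik.
  by rewrite commZl comm_mull -st_comm H2 st0 mul0r addr0 H1 ik mulr0 scaler0.
Qed.

Section Fixd.
Variable d : 'I_n -> A.
Hypothesis H1 : forall i j, comm (d i) (st (d j)) = (i == j)%:R.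
Hypothesis H2 : forall i j, comm (d i) (d j) = 0.

Lemma L1 (x y : 'I_n -> C) i :
  comm (\sum_(l < n) (x l *: d l + y l *: st (d l))) (st (d i)) = (x i)%:A.
Proof.
rewrite comm_suml (bigD1 i) //= big1 ?addr0.
  by rewrite commDl !commZl H1 -st_comm H2 st0 scaler0 addr0 eqxx.
move=> l /negbTE li.
by rewrite commDl !commZl H1 -st_comm H2 st0 scaler0 addr0 li scaler0.
Qed.

Lemma L1' (x y : 'I_n -> C) i :
  comm (\sum_(l < n) (x l *: d l + y l *: st (d l))) (d i) = (- y i)%:A.
Proof.
rewrite comm_suml (bigD1 i) //= big1 ?addr0.
  by rewrite commDl !commZl H2 commC H1 scaler0 add0r eqxx scalerN scaleNr.
move=> l /negbTE li.
by rewrite commDl !commZl H2 commC H1 scaler0 add0r eq_sym li oppr0 scaler0.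
Qed.

Lemma L2 (x y x' y' : 'I_n -> C) :
  comm (\sum_(l < n) (x l *: d l + y l *: st (d l)))
       (\sum_(l < n) (x' l *: st (d l) + y' l *: d l)) =
  (\sum_(l < n) (x l * x' l - y l * y' l))%:A.
Proof.
rewrite comm_sumr scaler_suml; apply: eq_bigr => m _.
rewrite commDr !commZr L1 L1' !scalerA -scalerDl; congr (_ *: 1); ring.
Qed.

Lemma st_form (x y : 'I_n -> C) :
  st (\sum_(l < n) (x l *: d l + y l *: st (d l))) =
  \sum_(l < n) ((x l)^* *: st (d l) + (y l)^* *: d l).
Proof. by rewrite st_sum; apply: eq_bigr => l _; rewrite stD !stZ stK. Qed.

End Fixd.

Definition adj m k (M : 'M[C]_(m, k)) : 'M[C]_(k, m) := (map_mx conjc M)^T.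

Lemma adjM m k l (M : 'M[C]_(m, k)) (N : 'M[C]_(k, l)) : adj (M *m N) = adj N *m adj M.
Proof. by rewrite /adj map_mxM trmx_mul. Qed.

Lemma self_entry m (w : 'rV[C]_m) : (w *m adj w) 0 0 = \sum_(i < m) w 0 i * (w 0 i)^*.
Proof. by rewrite mxE; apply: eq_bigr => i _; rewrite !mxE. Qed.

Lemma self_ge0 m (w : 'rV[C]_m) : 0 <= (w *m adj w) 0 0.
Proof. by rewrite self_entry; apply: sumr_ge0 => i _; apply: mulcJ_ge0. Qed.

Lemma self_eq0 m (w : 'rV[C]_m) : (w *m adj w) 0 0 = 0 -> w = 0.
Proof.
rewrite self_entry => /psumr_eq0P H; apply/rowP => i; rewrite mxE.
have := H (fun _ _ => mulcJ_ge0 _) i isT; rewrite -sqr_normc => /eqP.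
by rewrite sqrf_eq0 normr_eq0 => /eqP.
Qed.

Lemma sum_enum_set (T : finType) (S : {set T}) (F : T -> C) :
  \sum_(i < #|S|) F (enum_val i) = \sum_(i in S) F i.
Proof. by rewrite -big_enum_val. Qed.

Lemma key (H : A) (om om' : 'I_n -> R) (d d' : 'I_n -> A) (X X' : 'M[C]_(n, n + n)) :
  (forall i, d i = lin (row i X)) -> (forall i, d' i = lin (row i X')) ->
  (forall i j, comm (d i) (st (d j)) = (i == j)%:R) ->
  (forall i j, comm (d i) (d j) = 0) ->
  (forall i j, comm (d' i) (st (d' j)) = (i == j)%:R) ->
  (forall k, comm H (d k) = - (om k)%:C *: d k) ->
  (forall k, comm H (st (d k)) = (om k)%:C *: st (d k)) ->
  (forall k, comm H (d' k) = - (om' k)%:C *: d' k) ->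
  forall la, (#|[set j | om' j == la]| <= #|[set i | om i == la]|)%N.
Proof.
move=> Hd Hd' H1 H2 H1' Hk Hks Hk' la.
have H1X : forall i j, comm (lin (row i X)) (st (lin (row j X))) = (i == j)%:R.
  by move=> i j; rewrite -!Hd.
have H2X : forall i j, comm (lin (row i X)) (lin (row j X)) = 0.
  by move=> i j; rewrite -!Hd.
have : forall j, exists ab : ('I_n -> C) * ('I_n -> C),
    d' j = \sum_(i < n) (ab.1 i *: d i + ab.2 i *: st (d i)).
  move=> j; have [al [be E]] := span H1X H2X (row j X'); exists (al, be).
  by rewrite Hd' E; apply: eq_bigr => i _; rewrite Hd.
case/fin_all_exists => ab Hab.
pose al j i := (ab j).1 i; pose be j i := (ab j).2 i.
have Hab' : forall j, d' j = \sum_(i < n) (al j i *: d i + be j i *: st (d i)) := Hab.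
clear Hab.
have Gram : forall j k, \sum_(l < n) (al j l * (al k l)^* - be j l * (be k l)^*)
    = (j == k)%:R.
  move=> j k; apply: alg_inj; rewrite -nat_alg -(H1' j k).
  by rewrite (Hab' j) (Hab' k) st_form // L2.
have omrel : forall j i, - (om' j)%:C * al j i = - (om i)%:C * al j i.
  move=> j i.
  have E1 : comm H (d' j) = \sum_(l < n) ((- (om' j)%:C * al j l) *: d l
                                   + (- (om' j)%:C * be j l) *: st (d l)).
    by rewrite Hk' {1}(Hab' j) scaler_sumr; apply: eq_bigr => l _; rewrite scalerDr !scalerA.
  have E2 : comm H (d' j) = \sum_(l < n) ((- (om l)%:C * al j l) *: d l
                                   + ((om l)%:C * be j l) *: st (d l)).
    rewrite (Hab' j) comm_sumr; apply: eq_bigr => l _.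
    by rewrite commDr !commZr Hk Hks !scalerA [al j l * _]mulrC [be j l * _]mulrC.
  have := congr1 (fun z => comm z (st (d i))) (etrans (esym E1) E2).
  by rewrite /= !L1 // => /alg_inj.
pose S' := [set j | om' j == la]; pose S := [set i | om i == la].
have zero : forall j i, j \in S' -> i \notin S -> al j i = 0.
  move=> j i; rewrite !inE => /eqP hj hi.
  have /eqP := omrel j i; rewrite -subr_eq0 -mulrBl mulf_eq0 => /orP [|/eqP //].
  rewrite -!raddfN -raddfB fmorph_eq0 subr_eq0 eqr_opp hj => /eqP E.
  by rewrite E eqxx in hi.
pose Am : 'M[C]_(#|S'|, #|S|) := \matrix_(j, i) al (enum_val j) (enum_val i).
pose Bm : 'M[C]_(#|S'|, n) := \matrix_(j, i) be (enum_val j) i.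
have Gm : Am *m adj Am = 1%:M + Bm *m adj Bm.
  apply/matrixP => j k; rewrite !mxE.
  have -> : \sum_j0 Bm j j0 * adj Bm j0 k =
      \sum_(i < n) be (enum_val j) i * (be (enum_val k) i)^*.
    by apply: eq_bigr => i _; rewrite /adj !mxE.
  have GE := Gram (enum_val j) (enum_val k).
  move/eqP: GE; rewrite sumrB subr_eq (inj_eq enum_val_inj) => /eqP <-.
  transitivity (\sum_(i0 < #|S|) al (enum_val j) (enum_val i0) * (al (enum_val k) (enum_val i0))^*).
    by apply: eq_bigr => i _; rewrite /adj !mxE.
  rewrite (sum_enum_set S (fun i => al (enum_val j) i * (al (enum_val k) i)^*)).
  rewrite [RHS](bigID (fun i => i \in S)) /= [X in _ = _ + X]big1 ?addr0 //.
  by move=> i hi; rewrite zero ?mul0r // enum_valP.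
have U : Am *m adj Am \in unitmx.
  rewrite unitmxE unitfE; apply/negP => /det0P [v v0 hv].
  have : (v *m (Am *m adj Am) *m adj v) 0 0 = 0 by rewrite hv mul0mx mxE.
  rewrite Gm mulmxDr mulmx1 mulmxDl.
  have -> : forall (M1 M2 : 'M[C]_1), (M1 + M2) 0 0 = M1 0 0 + M2 0 0.
    by move=> M1 M2; rewrite mxE.
  have -> : v *m (Bm *m adj Bm) *m adj v = (v *m Bm) *m adj (v *m Bm).
    by rewrite adjM !mulmxA.
  move/eqP; rewrite paddr_eq0 ?self_ge0 // => /andP [/eqP /self_eq0 hv0 _].
  by rewrite hv0 eqxx in v0.
change (#|S'| <= #|S|)%N.
rewrite -(mxrank_unit U).
exact: leq_trans (mxrankM_maxl _ _) (rank_leq_col _).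
Qed.

Lemma lin_rowmx (a b : 'M[C]_n) i :
  lin (row i (row_mx a b)) = \sum_(j < n) (a i j *: p j + b i j *: q j).
Proof. apply: eq_bigr => j _; rewrite !mxE.
have -> : split (lshift n j) = inl j := unsplitK (inl _).
by have -> : split (rshift n j) = inr j := unsplitK (inr _).
Qed.

End Alg.

Lemma count_card (R : realType) (T : finType) (f : T -> R) la :
  count_mem la [seq f i | i <- enum T] = #|[set i | f i == la]|.
Proof.
rewrite count_map cardsE cardE /enum_mem size_filter count_filter.
by apply: eq_count => x /=; rewrite andbT.
Qed.

Lemma diag_data (R : realType) (n : nat) (A : algType R[i]) (st : A -> A)
  (p q : 'I_n -> A) H om c d :
  is_star st -> CCR st p q -> diag_form st p q H om c d ->
  exists X : 'M[R[i]]_(n, n + n),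
   [/\ forall i, d i = lin p q (row i X),
       forall i j, comm (d i) (st (d j)) = (i == j)%:R,
       forall i j, comm (d i) (d j) = 0,
       forall k, comm H (d k) = - (om k)%:C *: d k &
       forall k, comm H (st (d k)) = (om k)%:C *: st (d k)].
Proof.
move=> Hst Hccr [[a [b Hd]] H1 H2 HH].
have [Hk Hks] := H_comm Hst H1 H2 HH.
exists (row_mx a b); split => // i.
by rewrite lin_rowmx.
Qed.

Theorem theorem6 (R : realType) (n : nat) (A : algType R[i]) (st : A -> A)
  (p q : 'I_n -> A) (mu kappa gamma : 'M[R]_n) :
  is_star st -> CCR st p q -> mu^T = mu -> kappa^T = kappa ->
  dirac_diagonalizable st p q (quadH mu kappa gamma p q) ->
  forall (omega omega' : 'I_n -> R) (c c' : R) (d d' : 'I_n -> A),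
    diag_form st p q (quadH mu kappa gamma p q) omega c d ->
    diag_form st p q (quadH mu kappa gamma p q) omega' c' d' ->
    perm_eq [seq omega i | i <- enum 'I_n] [seq omega' i | i <- enum 'I_n].
Proof.
move=> Hst Hccr _ _ _ om om' c c' d d' F1 F2.
have [X [Hd H1 H2 Hk Hks]] := diag_data Hst Hccr F1.
have [X' [Hd' H1' H2' Hk' Hks']] := diag_data Hst Hccr F2.
apply/allP => la _ /=; rewrite !count_card eqn_leq.
apply/andP; split.
  exact: (key Hst Hccr Hd' Hd H1' H2' H1 Hk' Hks' Hk).
exact: (key Hst Hccr Hd Hd' H1 H2 H1' Hk Hks Hk').
Qed.
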